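(* There exist two tDCWs $\mathcal{D}_1,\mathcal{D}_2$ with $L(\mathcal{D}_1)=L(\mathcal{D}_2)$ that are both nice and minimal (no tDCW recognizing the same language has fewer states) and that are not isomorphic. Likewise, there exist two tDBWs recognizing the same language, both nice and minimal among tDBWs for that language, that are not isomorphic.
   Context: A tNCW is $\mathcal{A}=\langle\Sigma,Q,q_0,\delta,\alpha\rangle$: finite alphabet $\Sigma$, finite state set $Q$, initial state $q_0$, transition function $\delta:Q\times\Sigma\to 2^Q\setminus\{\emptyset\}$ with transition relation $\Delta=\{\langle q,\sigma,s\rangle:s\in\delta(q,\sigma)\}$, and $\alpha\subseteq\Delta$; its size is $|Q|$. $\alpha$-transitions are those in $\alpha$, $\bar\alpha$-transitions those in $\Delta\setminus\alpha$; $\delta^{\alpha}(q,\sigma)$, $\delta^{\bar\alpha}(q,\sigma)$ denote the $\sigma$-successors via $\alpha$-, resp. $\bar\alpha$-transitions. A run on $w=\sigma_1\sigma_2\cdots$ is $r_0r_1\cdots$ with $r_0=q_0$, $r_{i+1}\in\delta(r_i,\sigma_{i+1})$; it is accepting (co-Büchi) iff it traverses $\alpha$-transitions only finitely often. A tDCW is a tNCW with $|\delta(q,\sigma)|=1$ for all $q,\sigma$. A tDBW has the same syntax as a tDCW but a run is accepting iff it traverses $\alpha$-transitions infinitely often. $\mathcal{A}^q$ is $\mathcal{A}$ with initial state $q$; $q\sim s$ iff $L(\mathcal{A}^q)=L(\mathcal{A}^s)$. GFG: there is $f:\Sigma^*\to Q$ with $f(\epsilon)=q_0$, $\langle f(u),\sigma,f(u\sigma)\rangle\in\Delta$,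 and $f$'s run on every accepted word accepting; $q$ is GFG if $\mathcal{A}^q$ is. Nice: all states reachable and GFG, semantically deterministic (all $\sigma$-successors of a state pairwise $\sim$), safe deterministic ($|\delta^{\bar\alpha}(q,\sigma)|\le1$), and normal (a path of $\bar\alpha$-transitions from $q$ to $s$ implies one from $s$ to $q$); these notions are applied to tDBWs with the same structural meaning. For automata $\mathcal{A},\mathcal{B}$ with state sets $Q_\mathcal{A},Q_\mathcal{B}$, they are isomorphic if there is a bijection $\kappa:Q_\mathcal{A}\to Q_\mathcal{B}$ such that for all $q,q'\in Q_\mathcal{A}$ and $\sigma$: $q'\in\delta^{\bar\alpha}_\mathcal{A}(q,\sigma)$ iff $\kappa(q')\in\delta^{\bar\alpha}_\mathcal{B}(\kappa(q),\sigma)$, and $q'\in\delta^{\alpha}_\mathcal{A}(q,\sigma)$ iff $\kappa(q')\in\delta^{\alpha}_\mathcal{B}(\kappa(q),\sigma)$. *)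

(* Defs.v *)
From mathcomp Require Import all_boot.
Set Implicit Arguments. Unset Strict Implicit. Unset Printing Implicit Defensive.

(* The acceptance set is given as a boolean predicate on triples; the
   alpha-transitions are those triples of Delta on which it holds
   (so alpha is effectively intersected with Delta). *)
Record tNW (Sigma : finType) := TNW {
  st : finType;
  q0 : st;
  delta : st -> Sigma -> {set st};
  alpha : st -> Sigma -> st -> bool }.

Arguments q0 {Sigma} t.
Arguments delta {Sigma} t q s.
Arguments alpha {Sigma} t q s q'.

Inductive acc_cond := CoBuchi | Buchi.

Section Automata.
Variable Sigma : finType.
Implicit Types (A B : tNW Sigma) (c : acc_cond).

Definition wf_tNW A := forall q s, delta A q s != set0.

Definition is_alpha A q (s : Sigma) q' := (q' \in delta A q s) && alpha A q s q'.
Definition delta_a A q (s : Sigma) : {set st A} := [set q' in delta A q s | alpha A q s q'].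
Definition delta_na A q (s : Sigma) : {set st A} := [set q' in delta A q s | ~~ alpha A q s q'].

Definition word := nat -> Sigma.

(* run r_0 r_1 ... on w = sigma_1 sigma_2 ... ; here w i = sigma_{i+1} *)
Definition run_from A (q : st A) (w : word) (r : nat -> st A) :=
  r 0 = q /\ forall i, r i.+1 \in delta A (r i) (w i).

Definition acc_run c A (w : word) (r : nat -> st A) :=
  match c with
  | CoBuchi => exists N, forall i, N <= i -> ~~ is_alpha (r i) (w i) (r i.+1)
  | Buchi => forall N, exists i, N <= i /\ is_alpha (r i) (w i) (r i.+1)
  end.

Definition lang_from c A (q : st A) (w : word) :=
  exists r, run_from q w r /\ acc_run c w r.
Definition lang c A (w : word) := lang_from c (q0 A) w.

Definition equiv_st c A (q s : st A) := forall w, lang_from c q w <-> lang_from c s w.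

Definition prefix (w : word) (i : nat) : seq Sigma := [seq w j | j <- iota 0 i].

Definition GFG_from c A (q : st A) :=
  exists f : seq Sigma -> st A,
    f [::] = q /\
    (forall u s, f (rcons u s) \in delta A (f u) s) /\
    (forall w, lang_from c q w -> acc_run c w (fun i => f (prefix w i))).

Definition deltaS A (S : {set st A}) (u : seq Sigma) : {set st A} :=
  foldl (fun (S' : {set st A}) s => \bigcup_(q in S') delta A q s) S u.

Definition reachable A (q : st A) := exists u, q \in deltaS [set q0 A] u.

Definition sem_det c A :=
  forall (q : st A) s q1 q2, q1 \in delta A q s -> q2 \in delta A q s -> equiv_st c q1 q2.

Definition safe_det A := forall (q : st A) s, #|delta_na q s| <= 1.

Definition na_edge A : rel (st A) := fun q q' => [exists s, q' \in delta_na q s].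

Definition normal A := forall q q', connect (@na_edge A) q q' -> connect (@na_edge A) q' q.

Definition nice c A :=
  (forall q : st A, reachable q) /\ (forall q : st A, GFG_from c q) /\
  sem_det c A /\ safe_det A /\ normal A.

Definition deterministic A := forall q s, #|delta A q s| = 1.

Definition same_lang c A B := forall w, lang c A w <-> lang c B w.

Definition minimal_det c A :=
  deterministic A /\
  forall B : tNW Sigma, deterministic B -> same_lang c B A -> #|st A| <= #|st B|.

Definition isomorphic A B :=
  exists kappa : st A -> st B, bijective kappa /\
    forall (q q' : st A) s,
      (q' \in delta_na q s) = (kappa q' \in delta_na (kappa q) s) /\
      (q' \in delta_a q s) = (kappa q' \in delta_a (kappa q) s).

End Automata.

(* Main.v *)
Require Import Defs.
From mathcomp Require Import all_boot.
From Stdlib Require Import FunctionalExtensionality.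
Set Implicit Arguments. Unset Strict Implicit. Unset Printing Implicit Defensive.

Definition nxt (k : bool) (q : bool) (s : option bool) : bool :=
  match s with Some b => b | None => if k then false else q end.
Definition alp (q : bool) (s : option bool) (q' : bool) : bool := (s == None) || (q != q').
Definition D (k : bool) : tNW (option bool : finType) :=
  @TNW _ bool false (fun q s => [set nxt k q s]) alp.

Definition traj k (q : bool) (w : word (option bool : finType)) i := foldl (nxt k) q (Defs.prefix w i).

Lemma prefixS (T : finType) (w : word T) i : Defs.prefix w i.+1 = rcons (Defs.prefix w i) (w i).
Proof. by rewrite /Defs.prefix -addn1 iotaD map_cat add0n cats1. Qed.

Lemma trajS k q w i : traj k q w i.+1 = nxt k (traj k q w i) (w i).
Proof. by rewrite /traj prefixS foldl_rcons. Qed.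

Lemma run_traj k (q : bool) w r : @run_from _ (D k) q w r -> forall i, r i = traj k q w i.
Proof.
case=> r0 rS; elim=> [|i IH] //.
by move: (rS i); rewrite inE IH trajS => /eqP.
Qed.

Lemma isA k q s : @is_alpha _ (D k) q s (nxt k q s) = alp q s (nxt k q s).
Proof. by rewrite /is_alpha inE eqxx. Qed.

Lemma lang_traj c k (q : bool) w :
  @lang_from _ c (D k) q w <-> acc_run c w (traj k q w : nat -> st (D k)).
Proof.
split.
  case=> r [hr ha].
  have -> : (traj k q w : nat -> st (D k)) = r.
    by apply: functional_extensionality => i; rewrite (run_traj hr).
  exact ha.
move=> h; exists (traj k q w); split => //; split => // i.
by rewrite trajS inE.
Qed.

Lemma L1 k k' t t' x y : ~~ alp t x (nxt k t x) ->
  ~~ alp (nxt k t x) y (nxt k (nxt k t x) y) ->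
  ~~ alp (nxt k' t' x) y (nxt k' (nxt k' t' x) y).
Proof. by case: k k' t t' x y => [] [] [] [] [[]|] [[]|]. Qed.

Lemma L2 k k' t t' x y :
  alp (nxt k t x) y (nxt k (nxt k t x) y) ->
  alp t' x (nxt k' t' x) || alp (nxt k' t' x) y (nxt k' (nxt k' t' x) y).
Proof. by case: k k' t t' x y => [] [] [] [] [[]|] [[]|]. Qed.

Lemma sameL c k k' w : lang c (D k) w -> lang c (D k') w.
Proof.
rewrite /lang /= => /lang_traj h; apply/lang_traj; case: c h => /=.
  case=> N HN; exists N.+1 => -[|i] // Hi.
  move: (HN i Hi) (HN i.+1 (leqW Hi)); rewrite !trajS !isA => h1 h2.
  exact: L1 h1 h2.
move=> H N; case: (H N.+1) => -[|i] [Hi Ha] //.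
move: Ha; rewrite !trajS !isA => Ha.
case/orP: (L2 k' (traj k' false w i) Ha) => h.
  by exists i; split => //; rewrite trajS isA.
by exists i.+1; split; [exact: leqW | rewrite !trajS !isA].
Qed.

Lemma Ak_succ k w i x y : w i = Some x -> w i.+1 = Some y ->
  @is_alpha _ (D k) (traj k false w i.+1) (w i.+1) (traj k false w i.+2) = (x != y).
Proof. by move=> h1 h2; rewrite !trajS !isA h1 h2. Qed.

Lemma min_det c k (B : tNW (option bool : finType)) : deterministic B ->
  same_lang c B (D k) -> 2 <= #|st B|.
Proof.
move=> dB sL; rewrite ltnNge; apply/negP => Hle.
have allq : forall x : st B, x = q0 B.
  move=> x; move/card_le1P: Hle => h.
  by have := h (q0 B) isT x; rewrite !inE => /esym/eqP.
have loop : forall s, q0 B \in delta B (q0 B) s.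
  move=> s; have := dB (q0 B) s; move/eqP/cards1P => [x Hx].
  by rewrite Hx (allq x) set11.
have langB : forall w, lang c B w <-> acc_run c w (fun _ => q0 B).
  move=> w; split.
    case=> r [hr ha].
    have -> : (fun _ : nat => q0 B) = r.
      by apply: functional_extensionality => i; rewrite (allq (r i)).
    exact ha.
  move=> h; exists (fun _ => q0 B); split => //; split => // i; exact: loop.
have isB : forall s, is_alpha (q0 B) s (q0 B) = alpha B (q0 B) s (q0 B).
  by move=> s; rewrite /is_alpha loop.
case: c sL langB => sL langB.
- have ha : lang CoBuchi B (fun _ => Some false).
    apply/sL; rewrite /lang /=; apply/lang_traj; exists 1 => -[|i] // _.
    by rewrite (@Ak_succ _ _ _ false false).
  have hb : lang CoBuchi B (fun _ => Some true).
    apply/sL; rewrite /lang /=; apply/lang_traj; exists 1 => -[|i] // _.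
    by rewrite (@Ak_succ _ _ _ true true).
  move/langB: ha => [Na HNa]; move/langB: hb => [Nb HNb].
  have := HNa Na (leqnn _); have := HNb Nb (leqnn _); rewrite !isB => nb na.
  have : lang CoBuchi B (fun i => Some (odd i)).
    by apply/langB; exists 0 => i _; rewrite isB; case: (odd i).
  move/sL; rewrite /lang /= => /lang_traj [N HN].
  have := HN N.+1 (leqW (leqnn _)).
  by rewrite (@Ak_succ _ _ _ (odd N) (odd N.+1)) //=; case: (odd N).
- have na : ~~ alpha B (q0 B) (Some false) (q0 B).
    apply/negP => al.
    have : lang Buchi B (fun _ => Some false).
      by apply/langB => N; exists N; split => //; rewrite isB.
    move/sL; rewrite /lang /= => /lang_traj H.
    case: (H 1) => -[|i] [Hi Ha] //.
    by rewrite (@Ak_succ _ _ _ false false) in Ha.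
  have nb : ~~ alpha B (q0 B) (Some true) (q0 B).
    apply/negP => al.
    have : lang Buchi B (fun _ => Some true).
      by apply/langB => N; exists N; split => //; rewrite isB.
    move/sL; rewrite /lang /= => /lang_traj H.
    case: (H 1) => -[|i] [Hi Ha] //.
    by rewrite (@Ak_succ _ _ _ true true) in Ha.
  have : lang Buchi (D k) (fun i => Some (odd i)).
    rewrite /lang /=; apply/lang_traj => N; exists N.+1; split => //.
    by rewrite (@Ak_succ _ _ _ (odd N) (odd N.+1)) //=; case: (odd N).
  move/sL/langB => /(_ 0) [i [_ Ha]].
  by move: Ha; rewrite isB; case: (odd i); rewrite ?(negbTE na) ?(negbTE nb).
Qed.

Lemma detD k : deterministic (D k).
Proof. by move=> q s; rewrite cards1. Qed.

Lemma niceD c k : nice c (D k).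
Proof.
split; [|split; [|split; [|split]]].
- case=> /=.
    exists [:: Some true]; rewrite /deltaS /=.
    by apply/bigcupP; exists false; rewrite !inE.
  by exists [::]; rewrite /deltaS /= inE.
- move=> q; exists (foldl (nxt k) q); split => //; split.
    by move=> u s; rewrite foldl_rcons inE.
  by move=> w /lang_traj.
- move=> q s q1 q2; rewrite !inE => /eqP -> /eqP -> w; done.
- move=> q s; rewrite -(cards1 (nxt k q s)); apply: subset_leq_card.
  by apply/subsetP => x; rewrite inE => /andP[].
- have E : forall q q' : bool, @na_edge _ (D k) q q' -> q' = q.
    move=> q q' /existsP [s]; rewrite inE => /andP [].
    by rewrite inE /alp => /eqP ->; case: s => //= b; rewrite negbK => /eqP.
  move=> q q' /connectP [p pth ->].
  suff -> : last q p = q by exact: connect0.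
  elim: p q pth => //= x p IH q /andP [e1 pth].
  by rewrite IH // (E _ _ e1).
Qed.

Lemma notiso : ~ isomorphic (D true) (D false).
Proof.
case=> kap [/bij_inj kinj H].
case Hf : (kap false); case Ht : (kap true).
- by move: (kinj false true); rewrite Hf Ht => /(_ erefl).
- have := (H false false (Some false)).1; rewrite Hf /= !inE /alp /=.
  by [].
- have := (H true false None).2; rewrite Hf Ht /= !inE /alp /=.
  by [].
- by move: (kinj false true); rewrite Hf Ht => /(_ erefl).
Qed.

Theorem mainTheorem12 :
  (exists (Sigma : finType) (D1 D2 : tNW Sigma),
      deterministic D1 /\ deterministic D2 /\
      same_lang CoBuchi D1 D2 /\
      nice CoBuchi D1 /\ nice CoBuchi D2 /\
      minimal_det CoBuchi D1 /\ minimal_det CoBuchi D2 /\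
      ~ isomorphic D1 D2) /\
  (exists (Sigma : finType) (D1 D2 : tNW Sigma),
      deterministic D1 /\ deterministic D2 /\
      same_lang Buchi D1 D2 /\
      nice Buchi D1 /\ nice Buchi D2 /\
      minimal_det Buchi D1 /\ minimal_det Buchi D2 /\
      ~ isomorphic D1 D2).
Proof.
split; exists (option bool : finType), (D true), (D false);
  (split; [exact: detD|split; [exact: detD|split;
    [by move=> w; split; apply: sameL|split; [exact: niceD|split; [exact: niceD|
     split; [|split; [|exact: notiso]]]]]]]);
  (split; [exact: detD|by move=> B dB sL; rewrite card_bool; exact: min_det sL]).
Qed.
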